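(* For every $h\in\widehat{\operatorname{PC}^{\bowtie}}$ and every order-preserving homeomorphism $\phi$ of $[0,1[$, one has $\varepsilon(h\phi)=\varepsilon(h)=\varepsilon(\phi h)$.
   Context: $X=[0,1[$; $\widehat{\operatorname{PC}^{\bowtie}}$ is the group of bijections $X\to X$ continuous outside a finite subset, containing the group ${\mathfrak S}_{\mathrm{fin}}$ of finitely supported permutations with classical signature $\operatorname{sgn}$ valued in $\mathbb{Z}/2\mathbb{Z}$. For $h\in\widehat{\operatorname{PC}^{\bowtie}}$, a partition associated with $h$ is a finite partition $\mathcal P=\{I_1,\dots,I_n\}$ of $X$ into intervals $I_j=[\alpha_j,b_j[$ such that $h$ is continuous on $I_j^\circ=]\alpha_j,b_j[$ for each $j$ (so $h$ is strictly monotone there and $h(I_j^\circ)$ is an open interval). Let $\beta_j$ be the left endpoint of $h(I_j^\circ)$; $\{h(\alpha_j)\}=\{\beta_j\}$, and $\sigma_{(h,\mathcal P)}\in{\mathfrak S}_{\mathrm{fin}}$ sends $h(\alpha_j)$ to $\beta_j$ for each $j$ and fixes all other points. $R(h,\mathcal P)$ is the number of $j$ with $h$ decreasing on $I_j^\circ$, and $\varepsilon(h,\mathcal P)=R(h,\mathcal P)+\operatorname{sgn}(\sigma_{(h,\mathcal P)})\bmod 2$. There is a unique associated partition $\mathcal P^{\min}_h$ with the fewest intervals, every associated partition refines it, and $\varepsilon(h):=\varepsilon(h,\mathcal P^{\min}_h)$. *)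

(* Defs.v *)
From Stdlib Require Import Reals Lra List ClassicalEpsilon.
Import ListNotations.
Open Scope R_scope.

Definition X (x : R) : Prop := 0 <= x < 1.

Definition cont_within (D : R -> Prop) (f : R -> R) (x : R) : Prop :=
  forall eps, 0 < eps -> exists delta, 0 < delta /\
    forall y, D y -> Rabs (y - x) < delta -> Rabs (f y - f x) < eps.

Definition bij_X (f : R -> R) : Prop :=
  (forall x, X x -> X (f x)) /\
  (forall y, X y -> exists x, X x /\ f x = y /\ forall x', X x' -> f x' = y -> x' = x).

Definition in_PC (h : R -> R) : Prop :=
  bij_X h /\
  exists F : list R, forall x, X x -> ~ In x F -> cont_within X h x.

Definition order_homeo (phi : R -> R) : Prop :=
  bij_X phi /\
  (forall x y, X x -> X y -> x < y -> phi x < phi y) /\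
  (forall x, X x -> cont_within X phi x) /\
  exists psi : R -> R,
    (forall x, X x -> X (psi x)) /\
    (forall x, X x -> psi (phi x) = x) /\
    (forall y, X y -> phi (psi y) = y) /\
    (forall y, X y -> cont_within X psi y).

(** Finite partitions of X into intervals [c_j, c_{j+1}[ are encoded by the
    strictly increasing list of endpoints c = [c_0; ...; c_n] with c_0 = 0,
    c_n = 1 (n >= 1 intervals). *)
Fixpoint strictly_incr (c : list R) : Prop :=
  match c with
  | x :: ((y :: _) as t) => x < y /\ strictly_incr t
  | _ => True
  end.

Definition is_partition (c : list R) : Prop :=
  (2 <= length c)%nat /\ strictly_incr c /\
  nth 0 c 0 = 0 /\ nth (length c - 1) c 0 = 1.

Definition nintervals (c : list R) : nat := (length c - 1)%nat.
Definition lo (c : list R) (j : nat) : R := nth j c 0.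
Definition hi (c : list R) (j : nat) : R := nth (S j) c 0.
Definition open_int (c : list R) (j : nat) (x : R) : Prop := lo c j < x < hi c j.

Definition associated (h : R -> R) (c : list R) : Prop :=
  is_partition c /\
  forall j, (j < nintervals c)%nat ->
    forall x, open_int c j x -> cont_within (open_int c j) h x.

Definition decr_on (h : R -> R) (c : list R) (j : nat) : Prop :=
  forall x y, open_int c j x -> open_int c j y -> x < y -> h y < h x.

Definition is_inf_image (h : R -> R) (c : list R) (j : nat) (beta : R) : Prop :=
  (forall x, open_int c j x -> beta <= h x) /\
  (forall b, (forall x, open_int c j x -> b <= h x) -> b <= beta).

Definition beta (h : R -> R) (c : list R) (j : nat) : R :=
  epsilon (inhabits 0) (is_inf_image h c j).

Definition bcl (P : Prop) : bool :=
  if excluded_middle_informative P then true else false.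

Definition count_nat (n : nat) (P : nat -> Prop) : nat :=
  length (filter (fun j => bcl (P j)) (seq 0 n)).

Definition Rdec (h : R -> R) (c : list R) : nat :=
  count_nat (nintervals c) (decr_on h c).

(** sigma_(h,P) sends h(alpha_j) to beta_j and fixes every other point.
    Its signature is the parity of its number of inversions w.r.t. the order
    of R:  #{ (x,y) : x < y, sigma x > sigma y }, where it suffices to range
    over the finite support {h(alpha_j)}. *)
Definition inversions_sigma (h : R -> R) (c : list R) : nat :=
  let n := nintervals c in
  length (filter (fun p => bcl (h (lo c (fst p)) < h (lo c (snd p)) /\
                                beta h c (snd p) < beta h c (fst p)))
            (list_prod (seq 0 n) (seq 0 n))).

(** epsilon(h,P) in Z/2Z (represented by 0 or 1) *)
Definition eps_part (h : R -> R) (c : list R) : nat :=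
  ((Rdec h c + inversions_sigma h c) mod 2)%nat.

Definition minimal_associated (h : R -> R) (c : list R) : Prop :=
  associated h c /\ forall c', associated h c' -> (length c <= length c')%nat.

Definition eps (h : R -> R) : nat :=
  epsilon (inhabits 0%nat)
    (fun e => exists c, minimal_associated h c /\ eps_part h c = e).

(* Main.v *)
Require Import Defs.
From Stdlib Require Import Reals Lra Lia List ClassicalEpsilon Classical FunctionalExtensionality PropExtensionality.
Import ListNotations.
Open Scope R_scope.

Record HP (phi psi : R -> R) : Prop := {
  hp_X1 : forall x, X x -> X (phi x);
  hp_X2 : forall x, X x -> X (psi x);
  hp_inv1 : forall x, X x -> psi (phi x) = x;
  hp_inv2 : forall y, X y -> phi (psi y) = y;
  hp_inc1 : forall x y, X x -> X y -> x < y -> phi x < phi y;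
  hp_inc2 : forall x y, X x -> X y -> x < y -> psi x < psi y;
  hp_c1 : forall x, X x -> cont_within X phi x;
  hp_c2 : forall x, X x -> cont_within X psi x }.

Lemma HP_sym phi psi : HP phi psi -> HP psi phi.
Proof. intros []; constructor; auto. Qed.

Lemma order_HP phi : order_homeo phi -> exists psi, HP phi psi.
Proof.
  intros [Hb [Hinc [Hc [psi [H1 [H2 [H3 H4]]]]]]].
  exists psi. destruct Hb as [HX _]. constructor; auto.
  intros x y Hx Hy Hxy.
  destruct (Rtotal_order (psi x) (psi y)) as [?|[E|E]]; auto.
  - apply (f_equal phi) in E. rewrite !H3 in E; auto. lra.
  - apply Hinc in E; auto. rewrite !H3 in E; auto. lra.
Qed.

Lemma HP_0 phi psi : HP phi psi -> phi 0 = 0.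
Proof.
  intros H. assert (X0 : X 0) by (unfold X; lra).
  pose proof (hp_X1 _ _ H 0 X0) as A. pose proof (hp_X2 _ _ H 0 X0) as B.
  unfold X in *.
  destruct (Req_dec (psi 0) 0) as [E|E].
  - rewrite <- E at 1. rewrite (hp_inv2 _ _ H); auto.
  - assert (0 < psi 0) by lra.
    pose proof (hp_inc1 _ _ H 0 (psi 0) X0 (hp_X2 _ _ H 0 X0) H0).
    rewrite (hp_inv2 _ _ H) in H1; auto. lra.
Qed.

Lemma inc_iff phi psi x y : HP phi psi -> X x -> X y -> (x < y <-> phi x < phi y).
Proof.
  intros H Hx Hy; split; intro L.
  - apply (hp_inc1 _ _ H); auto.
  - destruct (Rtotal_order x y) as [?|[E|E]]; auto.
    + subst; lra.
    + apply (hp_inc1 _ _ H) in E; auto. lra.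
Qed.

Lemma si_step : forall c i, strictly_incr c -> (S i < length c)%nat -> nth i c 0 < nth (S i) c 0.
Proof.
  induction c as [|a t IH]; intros i H Hl; simpl in Hl. lia.
  destruct t as [|b t']. simpl in Hl; lia.
  destruct H as [Hab Ht]. destruct i. simpl. exact Hab.
  change (nth i (b::t') 0 < nth (S i) (b::t') 0). apply IH; auto. simpl in *; lia.
Qed.

Lemma si_mono c i k : strictly_incr c -> (i <= k)%nat -> (k < length c)%nat -> nth i c 0 <= nth k c 0.
Proof.
  intros Hs. induction k; intros Hik Hk.
  - replace i with 0%nat by lia. lra.
  - destruct (Nat.eq_dec i (S k)). subst; lra.
    apply Rle_trans with (nth k c 0). apply IHk; lia. left; apply si_step; auto.
Qed.

Lemma si_nth : forall c, (forall i, (S i < length c)%nat -> nth i c 0 < nth (S i) c 0) -> strictly_incr c.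
Proof.
  induction c as [|a t IH]; intros H. simpl; auto.
  destruct t as [|b t']. simpl; auto.
  split. apply (H 0%nat). simpl; lia.
  apply IH. intros i Hi. apply (H (S i)). simpl in *; lia.
Qed.

Lemma part_bnd c j : is_partition c -> (j < length c)%nat -> 0 <= nth j c 0 <= 1.
Proof.
  intros [Hl [Hs [H0 H1]]] Hj. split.
  pose proof (si_mono c 0 j Hs ltac:(lia) Hj); lra.
  pose proof (si_mono c j (length c - 1) Hs ltac:(lia) ltac:(lia)); lra.
Qed.

Lemma part_lohi c j : is_partition c -> (j < nintervals c)%nat ->
  0 <= lo c j /\ lo c j < hi c j /\ hi c j <= 1.
Proof.
  intros Hp Hj. unfold nintervals, lo, hi in *.
  pose proof (part_bnd c j Hp ltac:(lia)). pose proof (part_bnd c (S j) Hp ltac:(lia)).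
  destruct Hp as [_ [Hs _]]. pose proof (si_step c j Hs ltac:(lia)). lra.
Qed.

Lemma open_X c j x : is_partition c -> (j < nintervals c)%nat -> open_int c j x -> X x.
Proof. intros Hp Hj Ho. pose proof (part_lohi c j Hp Hj). unfold open_int, X in *. lra. Qed.

Lemma lo_X c j : is_partition c -> (j < nintervals c)%nat -> X (lo c j).
Proof. intros Hp Hj. pose proof (part_lohi c j Hp Hj). unfold X. lra. Qed.

Lemma mid_open c j : is_partition c -> (j < nintervals c)%nat -> open_int c j ((lo c j + hi c j)/2).
Proof. intros Hp Hj. pose proof (part_lohi c j Hp Hj). unfold open_int. lra. Qed.

Lemma cw_restrict (D E : R -> Prop) f x : (forall y, E y -> D y) -> cont_within D f x -> cont_within E f x.
Proof.
  intros HED H eps He. destruct (H eps He) as [d [Hd Hd']]. exists d; split; auto.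
Qed.

Lemma cw_ext (E : R -> Prop) f g x : (forall y, E y -> f y = g y) -> E x -> cont_within E f x -> cont_within E g x.
Proof.
  intros Hfg Ex H eps He. destruct (H eps He) as [d [Hd Hd']]. exists d; split; auto.
  intros y Ey Hy. rewrite <- !Hfg; auto.
Qed.

Lemma cw_comp (D E : R -> Prop) f g x : cont_within D f (g x) -> cont_within E g x ->
  (forall y, E y -> D (g y)) -> cont_within E (fun y => f (g y)) x.
Proof.
  intros Hf Hg HED eps He. destruct (Hf eps He) as [d1 [Hd1 H1]].
  destruct (Hg d1 Hd1) as [d2 [Hd2 H2]]. exists d2; split; auto.
Qed.

Lemma bcl_iff (P Q : Prop) : (P <-> Q) -> bcl P = bcl Q.
Proof.
  intros H. unfold bcl. destruct (excluded_middle_informative P); destruct (excluded_middle_informative Q); tauto.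
Qed.

Lemma count_ext n P Q : (forall j, (j < n)%nat -> (P j <-> Q j)) -> count_nat n P = count_nat n Q.
Proof.
  intros H. unfold count_nat. f_equal. apply filter_ext_in. intros j Hj.
  apply in_seq in Hj. apply bcl_iff, H. lia.
Qed.

Lemma inf_unique h c j a b : is_inf_image h c j a -> is_inf_image h c j b -> a = b.
Proof. intros [A1 A2] [B1 B2]. apply Rle_antisym; auto. Qed.
Definition ext (f : R -> R) (x : R) : R := if Rlt_dec x 1 then f x else x.

Lemma ext_lt f x : x < 1 -> ext f x = f x.
Proof. intros; unfold ext; destruct (Rlt_dec x 1); auto; lra. Qed.
Lemma ext_1 f : ext f 1 = 1.
Proof. unfold ext; destruct (Rlt_dec 1 1); lra. Qed.

Lemma nth_map0 f c j : f 0 = 0 -> nth j (map f c) 0 = f (nth j c 0).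
Proof. intros H. pose proof (map_nth f c 0 j). rewrite H in H0. exact H0. Qed.

Lemma ext0 phi psi : HP phi psi -> ext psi 0 = 0.
Proof. intros H. rewrite ext_lt by lra. apply (HP_0 psi phi), HP_sym, H. Qed.

Lemma part_map phi psi c : HP phi psi -> is_partition c -> is_partition (map (ext psi) c).
Proof.
  intros H Hp. pose proof (ext0 _ _ H) as E0. pose proof Hp as [Hl [Hs [H0 H1]]].
  split; [|split; [|split]].
  - rewrite length_map; auto.
  - apply si_nth. rewrite length_map. intros i Hi. rewrite !nth_map0 by auto.
    pose proof (part_lohi c i Hp ltac:(unfold nintervals; lia)) as L. unfold lo, hi in L.
    rewrite (ext_lt psi (nth i c 0)) by lra.
    assert (Xa : X (nth i c 0)) by (unfold X; lra).
    destruct (Rlt_dec (nth (S i) c 0) 1).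
    + rewrite ext_lt by lra. apply (hp_inc2 _ _ H); auto; unfold X; lra.
    + replace (nth (S i) c 0) with 1 by lra. rewrite ext_1.
      pose proof (hp_X2 _ _ H _ Xa). unfold X in *; lra.
  - rewrite nth_map0, H0; auto.
  - rewrite length_map, nth_map0, H1; auto. apply ext_1.
Qed.

Lemma nint_map f c : nintervals (map f c) = nintervals c.
Proof. unfold nintervals. rewrite length_map; auto. Qed.

Lemma open_map phi psi c j : HP phi psi -> is_partition c -> (j < nintervals c)%nat ->
  (forall y, open_int (map (ext psi) c) j y -> open_int c j (phi y)) /\
  (forall x, open_int c j x -> open_int (map (ext psi) c) j (psi x)).
Proof.
  intros H Hp Hj. pose proof (ext0 _ _ H) as E0.
  pose proof (part_lohi c j Hp Hj) as L. unfold open_int, lo, hi in *.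
  rewrite !nth_map0 by auto. rewrite (ext_lt psi (nth j c 0)) by lra.
  assert (Xa : X (nth j c 0)) by (unfold X; lra).
  pose proof (hp_X2 _ _ H _ Xa) as Xpa.
  split.
  - intros y Hy.
    assert (Xy : X y).
    { unfold X in *. split; [lra|].
      destruct (Rlt_dec (nth (S j) c 0) 1).
      + rewrite ext_lt in Hy by lra. assert (X (nth (S j) c 0)) by (unfold X; lra).
        pose proof (hp_X2 _ _ H _ H0). unfold X in *; lra.
      + replace (nth (S j) c 0) with 1 in Hy by lra. rewrite ext_1 in Hy. lra. }
    split.
    + rewrite <- (hp_inv2 _ _ H (nth j c 0)) at 1 by auto. apply (hp_inc1 _ _ H); auto; lra.
    + destruct (Rlt_dec (nth (S j) c 0) 1).
      * assert (Xb : X (nth (S j) c 0)) by (unfold X; lra).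
        rewrite ext_lt in Hy by lra.
        rewrite <- (hp_inv2 _ _ H (nth (S j) c 0)) by auto. apply (hp_inc1 _ _ H); auto; try lra.
        apply (hp_X2 _ _ H); auto.
      * pose proof (hp_X1 _ _ H _ Xy). unfold X in *; lra.
  - intros x Hx. assert (Xx : X x) by (unfold X; lra). split.
    + apply (hp_inc2 _ _ H); auto; lra.
    + destruct (Rlt_dec (nth (S j) c 0) 1).
      * rewrite ext_lt by lra. apply (hp_inc2 _ _ H); auto; try lra. unfold X; lra.
      * replace (nth (S j) c 0) with 1 by lra. rewrite ext_1.
        pose proof (hp_X2 _ _ H _ Xx). unfold X in *; lra.
Qed.
Lemma assoc_iff1 phi psi h c : HP phi psi -> is_partition c ->
  (associated h c <-> associated (fun x => h (phi x)) (map (ext psi) c)).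
Proof.
  intros H Hp. pose proof (part_map _ _ c H Hp) as Hp'. split.
  - intros [_ Ha]. split; auto. rewrite nint_map. intros j Hj y Hy.
    destruct (open_map _ _ c j H Hp Hj) as [O1 O2].
    apply (cw_comp (open_int c j) _ h phi).
    + apply Ha; auto.
    + apply (cw_restrict X). intros z Hz. apply (open_X _ j _ Hp'); auto. rewrite nint_map; auto.
      apply (hp_c1 _ _ H). apply (open_X _ j _ Hp'); auto. rewrite nint_map; auto.
    + auto.
  - intros [_ Ha]. split; auto. intros j Hj x Hx. rewrite nint_map in Ha.
    destruct (open_map _ _ c j H Hp Hj) as [O1 O2].
    apply (cw_ext _ (fun z => (fun w => h (phi w)) (psi z))); auto.
    { intros z Hz. rewrite (hp_inv2 _ _ H); auto. apply (open_X c j); auto. }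
    apply (cw_comp (open_int (map (ext psi) c) j) _ (fun w => h (phi w)) psi).
    + apply Ha; auto.
    + apply (cw_restrict X). intros z Hz. apply (open_X c j); auto.
      apply (hp_c2 _ _ H). apply (open_X c j); auto.
    + auto.
Qed.

Lemma eps_part1 phi psi h c : HP phi psi -> is_partition c ->
  eps_part (fun x => h (phi x)) (map (ext psi) c) = eps_part h c.
Proof.
  intros H Hp. pose proof (part_map _ _ c H Hp) as Hp'.
  assert (Hbeta : forall j, (j < nintervals c)%nat -> beta (fun x => h (phi x)) (map (ext psi) c) j = beta h c j).
  { intros j Hj. destruct (open_map _ _ c j H Hp Hj) as [O1 O2].
    assert (LB : forall b, (forall y, open_int (map (ext psi) c) j y -> b <= h (phi y)) <->
                 (forall x, open_int c j x -> b <= h x)).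
    { intro b; split; intros L x Hx.
      - rewrite <- (hp_inv2 _ _ H x). apply L; auto. apply (open_X c j); auto.
      - apply L; auto. }
    unfold beta. f_equal. apply functional_extensionality; intro b.
    apply propositional_extensionality. unfold is_inf_image.
    split; intros [L1 L2]; split.
    - apply LB; auto.
    - intros b' Hb'. apply L2. apply LB; auto.
    - apply LB; auto.
    - intros b' Hb'. apply L2. apply LB; auto. }
  assert (Hlo : forall j, (j < nintervals c)%nat -> h (phi (lo (map (ext psi) c) j)) = h (lo c j)).
  { intros j Hj. unfold lo. rewrite nth_map0 by (apply (ext0 _ _ H)).
    pose proof (lo_X c j Hp Hj) as Xl. unfold lo in Xl.
    rewrite ext_lt by (unfold X in Xl; lra). rewrite (hp_inv2 _ _ H); auto. }
  unfold eps_part. f_equal. f_equal.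
  - unfold Rdec. rewrite nint_map. apply count_ext. intros j Hj.
    destruct (open_map _ _ c j H Hp Hj) as [O1 O2]. unfold decr_on. split.
    + intros D x y Hx Hy Hxy.
      rewrite <- (hp_inv2 _ _ H x), <- (hp_inv2 _ _ H y) by (apply (open_X c j); auto).
      apply D; auto. apply (hp_inc2 _ _ H); auto; apply (open_X c j); auto.
    + intros D x y Hx Hy Hxy. apply D; auto.
      assert (nj : (j < nintervals (map (ext psi) c))%nat) by (rewrite nint_map; auto).
      apply (hp_inc1 _ _ H); auto; apply (open_X _ j _ Hp' nj); auto.
  - unfold inversions_sigma. rewrite nint_map. f_equal. apply filter_ext_in.
    intros [a b] Hab. apply in_prod_iff in Hab. destruct Hab as [Ha Hb].
    apply in_seq in Ha. apply in_seq in Hb. cbn [fst snd].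
    rewrite (Hlo a), (Hlo b), (Hbeta a), (Hbeta b) by lia. reflexivity.
Qed.

Lemma map_back phi psi c : HP phi psi -> is_partition c ->
  map (ext psi) (map (ext phi) c) = c.
Proof.
  intros H Hp. rewrite map_map. rewrite <- (map_id c) at 2. apply map_ext_in.
  intros x Hx. apply In_nth with (d := 0) in Hx. destruct Hx as [n [Hn E]].
  pose proof (part_bnd c n Hp Hn) as B. rewrite E in B.
  destruct (Rlt_dec x 1).
  - assert (Xx : X x) by (unfold X; lra). rewrite (ext_lt phi) by lra.
    pose proof (hp_X1 _ _ H x Xx) as Xp. rewrite ext_lt by (unfold X in Xp; lra).
    apply (hp_inv1 _ _ H); auto.
  - replace x with 1 by lra. rewrite !ext_1; auto.
Qed.

Lemma inf_exists h c j : is_partition c -> (j < nintervals c)%nat -> (forall x, X x -> X (h x)) ->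
  exists b, is_inf_image h c j b /\ X b.
Proof.
  intros Hp Hj HX.
  set (E := fun b => forall x, open_int c j x -> b <= h x).
  pose proof (mid_open c j Hp Hj) as Hm. set (m := (lo c j + hi c j)/2) in *.
  assert (Bd : bound E).
  { exists (h m). intros b Hb. apply Hb; auto. }
  assert (Ne : exists x, E x).
  { exists 0. intros x Hx. pose proof (HX x (open_X c j x Hp Hj Hx)). unfold X in *; lra. }
  destruct (completeness E Bd Ne) as [s [S1 S2]].
  exists s. split. split.
  - intros x Hx. apply S2. intros b Hb. apply Hb; auto.
  - intros b Hb. apply S1. exact Hb.
  - assert (0 <= s) by (apply S1; destruct Ne as [z Hz]; intros x Hx; pose proof (HX x (open_X c j x Hp Hj Hx)); unfold X in *; lra).
    assert (s <= h m) by (apply S2; intros b Hb; apply Hb; auto).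
    pose proof (HX m (open_X c j m Hp Hj Hm)). unfold X in *; lra.
Qed.

Lemma beta_spec h c j : is_partition c -> (j < nintervals c)%nat -> (forall x, X x -> X (h x)) ->
  is_inf_image h c j (beta h c j) /\ X (beta h c j).
Proof.
  intros Hp Hj HX. destruct (inf_exists h c j Hp Hj HX) as [b [Hb Xb]].
  assert (is_inf_image h c j (beta h c j)).
  { unfold beta. apply epsilon_spec. exists b; auto. }
  split; auto. rewrite (inf_unique h c j _ b); auto.
Qed.

Lemma beta_phi phi psi h c j : HP phi psi -> is_partition c -> (j < nintervals c)%nat ->
  (forall x, X x -> X (h x)) ->
  beta (fun x => phi (h x)) c j = phi (beta h c j).
Proof.
  intros H Hp Hj HX.
  destruct (beta_spec h c j Hp Hj HX) as [[B1 B2] Xb]. set (b := beta h c j) in *.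
  assert (HX' : forall x, X x -> X (phi (h x))) by (intros; apply (hp_X1 _ _ H); auto).
  destruct (beta_spec _ c j Hp Hj HX') as [Hb' _].
  apply (inf_unique (fun x => phi (h x)) c j); auto. split.
  - intros x Hx. pose proof (B1 x Hx). pose proof (HX x (open_X c j x Hp Hj Hx)).
    destruct H0 as [L|E]. left; apply (hp_inc1 _ _ H); auto. rewrite E; lra.
  - intros b' Hb'2. destruct (Rle_dec b' (phi b)) as [|N]; auto. exfalso.
    destruct (hp_c1 _ _ H b Xb (b' - phi b) ltac:(lra)) as [d [Hd Hc]].
    destruct (classic (exists x, open_int c j x /\ h x < b + d)) as [[x [Hx Hlt]]|N2].
    + pose proof (B1 x Hx). pose proof (HX x (open_X c j x Hp Hj Hx)) as Xh.
      assert (Rabs (h x - b) < d) by (rewrite Rabs_right; lra).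
      pose proof (Hc (h x) Xh H1). pose proof (Hb'2 x Hx).
      apply Rabs_def2 in H2. lra.
    + assert (b + d <= b). apply B2. intros x Hx. apply Rnot_lt_le. intro L. apply N2. eauto.
      lra.
Qed.

Lemma assoc_iff2 phi psi h c : HP phi psi -> is_partition c -> (forall x, X x -> X (h x)) ->
  (associated h c <-> associated (fun x => phi (h x)) c).
Proof.
  intros H Hp HX. split; intros [_ Ha]; split; auto; intros j Hj x Hx.
  - apply (cw_comp X _ phi h).
    + apply (hp_c1 _ _ H). apply HX. apply (open_X c j); auto.
    + apply Ha; auto.
    + intros y Hy. apply HX. apply (open_X c j); auto.
  - apply (cw_ext _ (fun z => psi (phi (h z)))); auto.
    { intros z Hz. apply (hp_inv1 _ _ H). apply HX. apply (open_X c j); auto. }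
    apply (cw_comp X _ psi (fun z => phi (h z))).
    + apply (hp_c2 _ _ H). apply (hp_X1 _ _ H). apply HX. apply (open_X c j); auto.
    + apply Ha; auto.
    + intros y Hy. apply (hp_X1 _ _ H). apply HX. apply (open_X c j); auto.
Qed.

Lemma eps_part2 phi psi h c : HP phi psi -> is_partition c -> (forall x, X x -> X (h x)) ->
  eps_part h c = eps_part (fun x => phi (h x)) c.
Proof.
  intros H Hp HX. unfold eps_part. f_equal. f_equal.
  - unfold Rdec. apply count_ext. intros j Hj. unfold decr_on. split.
    + intros D x y Hx Hy Hxy.
      pose proof (HX x (open_X c j x Hp Hj Hx)). pose proof (HX y (open_X c j y Hp Hj Hy)).
      apply (proj1 (inc_iff _ _ _ _ H H1 H0)). auto.
    + intros D x y Hx Hy Hxy.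
      pose proof (HX x (open_X c j x Hp Hj Hx)). pose proof (HX y (open_X c j y Hp Hj Hy)).
      apply (proj2 (inc_iff _ _ _ _ H H1 H0)). auto.
  - unfold inversions_sigma. f_equal. apply filter_ext_in.
    intros [a b] Hab. apply in_prod_iff in Hab. destruct Hab as [Ha Hb].
    apply in_seq in Ha. apply in_seq in Hb. cbn [fst snd].
    assert (Ha' : (a < nintervals c)%nat) by lia. assert (Hb' : (b < nintervals c)%nat) by lia.
    rewrite (beta_phi _ _ h c a H Hp Ha' HX), (beta_phi _ _ h c b H Hp Hb' HX).
    apply bcl_iff.
    pose proof (beta_spec h c a Hp Ha' HX) as [_ Xa].
    pose proof (beta_spec h c b Hp Hb' HX) as [_ Xb].
    pose proof (HX _ (lo_X c a Hp Ha')). pose proof (HX _ (lo_X c b Hp Hb')).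
    rewrite (inc_iff _ _ (h (lo c a)) (h (lo c b)) H), (inc_iff _ _ (beta h c b) (beta h c a) H) by auto.
    tauto.
Qed.

Theorem lemma3p7 (h phi : R -> R) :
  in_PC h -> order_homeo phi ->
  eps (fun x => h (phi x)) = eps h /\ eps h = eps (fun x => phi (h x)).
Proof.
  intros Hh Hphi. destruct (order_HP phi Hphi) as [psi H].
  assert (H' : HP psi phi) by (apply HP_sym; auto).
  assert (HX : forall x, X x -> X (h x)) by (destruct Hh as [[A _] _]; exact A).
  split; unfold eps; f_equal; apply functional_extensionality; intro e;
    apply propositional_extensionality; split.
  - intros [c' [[Ha Hm] He]].
    pose proof (proj1 Ha) as Hp'.
    pose proof (part_map _ _ c' H' Hp') as Hp.
    pose proof (map_back _ _ c' H Hp') as Eb.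
    exists (map (ext phi) c'). split; [split|].
    + apply (proj2 (assoc_iff1 phi psi h _ H Hp)). rewrite Eb; auto.
    + intros c'' Ha''. pose proof (proj1 Ha'') as Hp''.
      pose proof (proj1 (assoc_iff1 phi psi h c'' H Hp'') Ha'') as A.
      apply Hm in A. rewrite length_map in *. exact A.
    + rewrite <- He. rewrite <- Eb at 2. symmetry. apply eps_part1; auto.
  - intros [c [[Ha Hm] He]]. pose proof (proj1 Ha) as Hp.
    exists (map (ext psi) c). split; [split|].
    + apply (proj1 (assoc_iff1 phi psi h _ H Hp)); auto.
    + intros c'' Ha''. pose proof (proj1 Ha'') as Hp''.
      pose proof (part_map _ _ c'' H' Hp'') as Hq.
      pose proof (map_back _ _ c'' H Hp'') as Eb.
      assert (A : associated h (map (ext phi) c'')).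
      { apply (proj2 (assoc_iff1 phi psi h _ H Hq)). rewrite Eb; auto. }
      apply Hm in A. rewrite length_map in *. exact A.
    + rewrite <- He. apply eps_part1; auto.
  - intros [c [[Ha Hm] He]]. pose proof (proj1 Ha) as Hp.
    exists c. split; [split|].
    + apply (proj1 (assoc_iff2 phi psi h c H Hp HX)); auto.
    + intros c'' Ha''. apply Hm. apply (proj2 (assoc_iff2 phi psi h c'' H (proj1 Ha'') HX)); auto.
    + rewrite <- He. symmetry. apply (eps_part2 phi psi); auto.
  - intros [c [[Ha Hm] He]]. pose proof (proj1 Ha) as Hp.
    exists c. split; [split|].
    + apply (proj2 (assoc_iff2 phi psi h c H Hp HX)); auto.
    + intros c'' Ha''. apply Hm. apply (proj1 (assoc_iff2 phi psi h c'' H (proj1 Ha'') HX)); auto.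
    + rewrite <- He. apply (eps_part2 phi psi); auto.
Qed.
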